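(* Let $K\ge2$ and let $C_1,\dots,C_{K-1}>0$. Let $\Phi$ be the cumulative distribution function of the standard normal distribution. Then the function $f:\mathbb{R}^K\to\mathbb{R}$, $f(\vec{x})=\sum_{i=1}^{K-1}\Phi(C_ix_i-C_ix_K)$, is convex on the domain $D=\{\vec{x}\in\mathbb{R}^K: x_i-x_K\le 0\ \forall i<K\}$. *)

(* Defs.v *)
From HB Require Import structures.
From mathcomp Require Import all_boot all_order all_algebra.
From mathcomp Require Import all_classical all_reals all_analysis.
Set Implicit Arguments. Unset Strict Implicit. Unset Printing Implicit Defensive.
Import Order.TTheory GRing.Theory Num.Theory.
Local Open Scope classical_set_scope.
Local Open Scope ring_scope.

Definition Phi {R : realType} (t : R) : R :=
  fine (normal_prob 0 1 `]-oo, t]).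

(* Last index K-1 (0-based) of 'I_K, i.e. the paper's index K. *)
Definition ordlast (K : nat) (hK : (0 < K)%N) : 'I_K :=
  Ordinal (etrans (ltn_predL K) hK).

(* The paper's indices i = 1..K-1 are the 0-based i : 'I_K.-1, embedded in 'I_K. *)
Definition idx (K : nat) (i : 'I_K.-1) : 'I_K := widen_ord (leq_pred K) i.

Definition fPhi {R : realType} (K : nat) (hK : (0 < K)%N) (C : 'I_K.-1 -> R)
  (x : 'rV[R]_K) : R :=
  \sum_(i < K.-1) Phi (C i * x 0 (idx i) - C i * x 0 (ordlast hK)).

Definition Dom {R : realType} (K : nat) (hK : (0 < K)%N) : set 'rV[R]_K :=
  [set x | forall i : 'I_K.-1, x 0 (idx i) - x 0 (ordlast hK) <= 0].

(* Main.v *)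
Require Import Defs.
From HB Require Import structures.
From mathcomp Require Import all_boot all_order all_algebra.
From mathcomp Require Import all_classical all_reals all_analysis.
From mathcomp Require Import ring lra.
Import Order.TTheory GRing.Theory Num.Theory.
Local Open Scope classical_set_scope.
Local Open Scope ring_scope.
Set Implicit Arguments. Unset Strict Implicit.

Section PhiConvex.
Variable R : realType.

Local Notation P := (normal_prob (0:R) 1).
Local Notation phi := (normal_pdf (0:R) 1).

Lemma phi_mono (x y : R) : x <= y -> y <= 0 -> phi x <= phi y.
Proof.
move=> xy y0; rewrite normal_pdfE ?oner_neq0 //=.
rewrite ler_pM2l ?normal_peak_gt0 ?oner_neq0 //.
rewrite /normal_fun !subr0 ler_expR !mulNr lerN2.
rewrite ler_pM2r; last by rewrite invr_gt0 expr1n.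
nra.
Qed.

Lemma Pfin (A : set R) : measurable A -> P A \is a fin_num.
Proof. move=> mA; exact: fin_num_measure. Qed.

Lemma Phi_split (a c : R) : a <= c -> Phi c = Phi a + fine (P `]a, c]).
Proof.
move=> ac; rewrite /Phi.
have -> : [set` `]-oo, c]] = [set` `]-oo, a]] `|` [set` `]a, c]] :> set R.
  by apply: itv_bndbnd_setU; rewrite // bnd_simp.
rewrite measureU //; last first.
  apply/seteqP; split => x //= [] /=; rewrite !in_itv /= => xa /andP[ax _].
  by move: (lt_le_trans ax xa); rewrite ltxx.
by rewrite fineD ?Pfin.
Qed.

Lemma P_ub (a c : R) : a <= c -> c <= 0 -> fine (P `]a, c]) <= phi c * (c - a).
Proof.
move=> ac c0; rewrite -lee_fin fineK ?Pfin //.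
rewrite /normal_prob.
apply: (@le_trans _ _ (\int[lebesgue_measure]_(x in `]a, c]) cst (phi c)%:E x)%E).
  apply: ge0_le_integral => //.
  - by move=> x _; rewrite lee_fin normal_pdf_ge0.
  - apply/measurable_realfun.measurable_EFinP; apply: measurable_funTS; exact: measurable_normal_pdf.
  - move=> x /=; rewrite in_itv /= => /andP[ax xc]; rewrite lee_fin.
    exact: phi_mono.
rewrite integral_cst //.
rewrite [X in (_ * X)%E](lebesgue_measure_itv `]a, c]) /=.
case: ifP => _; first by rewrite -EFinD -EFinM.
by rewrite mule0 lee_fin mulr_ge0 ?normal_pdf_ge0 // subr_ge0.
Qed.

Lemma P_lb (c b : R) : c <= b -> b <= 0 -> phi c * (b - c) <= fine (P `]c, b]).
Proof.
move=> cb b0; rewrite -lee_fin fineK ?Pfin //.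
rewrite /normal_prob.
apply: (@le_trans _ _ (\int[lebesgue_measure]_(x in `]c, b]) cst (phi c)%:E x)%E); last first.
  apply: ge0_le_integral => //.
  - by move=> x _; rewrite lee_fin normal_pdf_ge0.
  - apply/measurable_realfun.measurable_EFinP; apply: measurable_funTS; exact: measurable_normal_pdf.
  - move=> x /=; rewrite in_itv /= => /andP[cx xb]; rewrite lee_fin.
    apply: phi_mono; [exact: ltW | exact: le_trans xb b0].
rewrite integral_cst // [X in (_ * X)%E](lebesgue_measure_itv `]c, b]) /=.
case: ifP => [_|]; first by rewrite -EFinD -EFinM.
rewrite lte_fin => /negbT; rewrite -leNgt => bc.
have -> : b = c by apply/eqP; rewrite eq_le bc cb.
by rewrite subrr mulr0 mule0.
Qed.

Lemma Phi_convR (a b t : R) : a <= 0 -> b <= 0 -> 0 <= t -> t <= 1 ->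
  Phi (t * a + (1 - t) * b) <= t * Phi a + (1 - t) * Phi b.
Proof.
wlog ab : a b t / a <= b.
  move=> H a0 b0 t0 t1; have [ab|ba] := leP a b; first exact: H.
  have := H b a (1 - t) (ltW ba) b0 a0 ltac:(lra) ltac:(lra).
  by rewrite opprB addrCA subrr addr0 addrC [X in _ <= X]addrC.
move=> a0 b0 t0 t1.
set c := t * a + (1 - t) * b.
have ac : a <= c by rewrite /c; nra.
have cb : c <= b by rewrite /c; nra.
rewrite (Phi_split cb) (Phi_split ac).
have h1 := P_ub ac (le_trans cb b0).
have h2 := P_lb cb b0.
set p1 := fine (P `]a, c]) in h1 *.
set p2 := fine (P `]c, b]) in h2 *.
have e1 : t * p1 <= t * (phi c * (c - a)) by rewrite ler_wpM2l.
have e2 : (1 - t) * (phi c * (b - c)) <= (1 - t) * p2 by rewrite ler_wpM2l ?subr_ge0.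
have e : t * (phi c * (c - a)) = (1 - t) * (phi c * (b - c)) by rewrite /c; ring.
lra.
Qed.

End PhiConvex.

Theorem lemma2 (R : realType) (K : nat) (hK : (2 <= K)%N) (C : 'I_K.-1 -> R)
  (hC : forall i, 0 < C i) :
  convex_function (E := 'rV[R]_K) (Dom (ltnW hK)) (fPhi (ltnW hK) C).
Proof.
move=> t x y /set_mem hx /set_mem hy.
Open Scope convex_scope.
rewrite convRE.
have -> : x <| t |> y = (t%:num *: (x : 'rV[R]_K) + (1 - t%:num) *: y) by [].
rewrite /fPhi !mulr_sumr -big_split /=; apply: ler_sum => i _.
rewrite !mxE.
set u := C i * x 0 (idx i) - C i * x 0 (ordlast (ltnW hK)).
set v := C i * y 0 (idx i) - C i * y 0 (ordlast (ltnW hK)).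
have hu : u <= 0.
  by rewrite /u -mulrBr pmulr_rle0 ?hC //; exact: hx.
have hv : v <= 0.
  by rewrite /v -mulrBr pmulr_rle0 ?hC //; exact: hy.
have t0 : 0 <= t%:num by [].
have t1 : t%:num <= 1 by [].
have := Phi_convR hu hv t0 t1.
rewrite /u /v.
congr (Phi _ <= _); ring.
Qed.
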